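(* Let $G$ be a finite, simple, connected graph with $\dim_{wt}(G)=2$ and let $\{u,v\}$ be a weak total metric basis of $G$. Then: (1) there is a unique geodesic (shortest path) $P$ between $u$ and $v$; (2) every neighbor of $u$ and every neighbor of $v$ has degree at most three; (3) every vertex of $P$ other than $u$, $v$ and their neighbors has degree at most five; (4) the maximum degree of $G$ is at most eight; (5) for each $w\in\{u,v\}$ and each $z\in N(w)$, every $r\in N(z)$ satisfies $r\not\sim w$.
   Context: $d(x,y)$ is the shortest-path distance, $N(x)$ the set of neighbors of $x$, and $x\sim y$ denotes adjacency. A set $W\subseteq V(G)$ is a resolving set if for every two distinct vertices $y,z$ there is $x\in W$ with $d(y,x)\ne d(z,x)$. A set $W$ is a weak total resolving set (WTR-set) if $W$ is resolving and, for every $w\in W$ and every $x\in V(G)\setminus W$, there is $w'\in W\setminus\{w\}$ with $d(x,w')\ne d(w,w')$. $\dim_{wt}(G)$ is the minimum cardinality of a WTR-set, and a weak total metric basis is a WTR-set of that cardinality. *)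

(* Defs.v *)
(* A finite simple graph is a symmetric irreflexive relation
   e : rel T on a finType T. *)
From mathcomp Require Import all_boot.
Set Implicit Arguments. Unset Strict Implicit. Unset Printing Implicit Defensive.

Section Graph.
Variables (T : finType) (e : rel T).

Fixpoint walkn (n : nat) (x y : T) : bool :=
  if n is n'.+1 then [exists z, e x z && walkn n' z y] else x == y.

(* shortest-path distance: least n with a walk of length n
   (in a connected graph this is < #|T|; returns #|T| if unreachable) *)
Definition dist (x y : T) : nat :=
  find (fun n => walkn n x y) (iota 0 #|T|).

Definition nbhd (x : T) : {set T} := [set y | e x y].
Definition deg (x : T) : nat := #|nbhd x|.

Definition connected_graph : Prop := forall x y : T, connect e x y.

Definition resolving (W : {set T}) : bool :=
  [forall y, forall z, (y != z) ==> [exists x in W, dist y x != dist z x]].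

Definition wtr_set (W : {set T}) : bool :=
  resolving W &&
  [forall w in W, forall x in ~: W,
     [exists w' in W :\ w, dist x w' != dist w w']].

(* dim_wt: minimum cardinality of a WTR-set (the full vertex set is one) *)
Definition dim_wt : nat :=
  find (fun k => [exists W : {set T}, wtr_set W && (#|W| == k)]) (iota 0 #|T|.+1).

Definition wt_metric_basis (W : {set T}) : bool :=
  wtr_set W && (#|W| == dim_wt).

(* p is (the vertex sequence after u of) a geodesic from u to v *)
Definition geodesic (u v : T) (p : seq T) : bool :=
  [&& path e u p, last u p == v & size p == dist u v].

End Graph.

(* Main.v *)
Require Import Defs.
From mathcomp Require Import all_boot zify.

Lemma walkn_cat {T : finType} {e : rel T} {a b x y z} :
  walkn e a x y -> walkn e b y z -> walkn e (a + b) x z.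
Proof.
elim: a x => [|a IH] x /=; first by move=> /eqP ->.
move=> /existsP [w /andP [exw hw]] hb; apply/existsP; exists w.
by rewrite exw (IH _ hw hb).
Qed.

Lemma walkn_sym {T : finType} {e : rel T} (e_sym : symmetric e) n x y :
  walkn e n x y -> walkn e n y x.
Proof.
elim: n x => [|n IH] x /=; first by rewrite eq_sym.
move=> /existsP [w /andP [exw hw]].
have h1 : walkn e 1 w x by apply/existsP; exists x; rewrite e_sym exw eqxx.
by have := walkn_cat (IH _ hw) h1; rewrite addn1.
Qed.

Lemma path_walkn {T : finType} {e : rel T} x p :
  path e x p -> walkn e (size p) x (last x p).
Proof.
elim: p x => [|y p IH] x /=; first by [].
move=> /andP [exy hp]; apply/existsP; exists y; by rewrite exy IH.
Qed.

Lemma dist_le {T : finType} {e : rel T} n x y :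
  walkn e n x y -> dist e x y <= n.
Proof.
move=> h; rewrite /dist; set P := (fun n => walkn e n x y).
case: (ltnP n #|T|) => hn; last by apply: leq_trans (find_size _ _) _; rewrite size_iota.
rewrite leqNgt; apply/negP => hlt.
have := before_find 0 hlt; rewrite nth_iota // add0n.
by rewrite /P h.
Qed.

Lemma dist_walk {T : finType} {e : rel T} (e_conn : connected_graph e) x y :
  walkn e (dist e x y) x y.
Proof.
have [n hn hw] : exists2 n, n < #|T| & walkn e n x y.
  move: (e_conn x y) => /connectP [p hp ->].
  case: (shortenP hp) => p' hp' hu _.
  exists (size p'); last exact: path_walkn.
  move/card_uniqP: hu => /= <-; exact: max_card.
rewrite /dist; set P := (fun n => walkn e n x y).
have hh : has P (iota 0 #|T|) by apply/hasP; exists n; rewrite ?mem_iota.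
have hf : find P (iota 0 #|T|) < #|T| by move: hh; rewrite has_find size_iota.
by have := nth_find 0 hh; rewrite nth_iota.
Qed.

Lemma dist_sym {T : finType} {e : rel T} (e_sym : symmetric e) (e_conn : connected_graph e) x y :
  dist e x y = dist e y x.
Proof.
by apply/eqP; rewrite eqn_leq !dist_le // walkn_sym // dist_walk.
Qed.

Lemma dist_tri {T : finType} {e : rel T} (e_conn : connected_graph e) x y z :
  dist e x z <= dist e x y + dist e y z.
Proof. by apply: dist_le; apply: walkn_cat; apply: dist_walk. Qed.

Lemma dist_edge {T : finType} {e : rel T} (e_conn : connected_graph e) x y z :
  e x y -> dist e x z <= (dist e y z).+1.
Proof.
move=> h; apply: dist_le => /=; apply/existsP; exists y; by rewrite h dist_walk.
Qed.

Lemma dist0 {T : finType} {e : rel T} (e_conn : connected_graph e) x y :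
  (dist e x y == 0) = (x == y).
Proof.
apply/idP/idP => [/eqP h | /eqP ->].
  by have := dist_walk e_conn x y; rewrite h.
by rewrite -leqn0; apply: (@dist_le _ _ 0) => /=.
Qed.

Lemma dist1 {T : finType} {e : rel T} (e_irr : irreflexive e) (e_conn : connected_graph e) x y :
  (dist e x y == 1) = e x y.
Proof.
apply/idP/idP => [/eqP h | h].
  have := dist_walk e_conn x y; rewrite h /= => /existsP [w /andP [? /eqP <-]] //.
rewrite eqn_leq (@dist_le _ _ 1) /=; last by apply/existsP; exists y; rewrite h eqxx.
rewrite lt0n dist0 //; apply/eqP => exy; by rewrite exy e_irr in h.
Qed.


Lemma walk_path {T : finType} {e : rel T} n x y :
  walkn e n x y -> exists p, [&& path e x p, last x p == y & size p == n].
Proof.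
elim: n x => [|n IH] x /=.
  by move=> /eqP ->; exists [::]; rewrite /= eqxx.
move=> /existsP [w /andP [exw hw]]; have [p /and3P [h1 h2 h3]] := IH _ hw.
by exists (w :: p); rewrite /= exw h1 h2 eqSS h3.
Qed.

Lemma inj_uv {T : finType} {e : rel T} (u v : T) (hw : wtr_set e [set u; v]) y z :
  dist e y u = dist e z u -> dist e y v = dist e z v -> y = z.
Proof.
move=> h1 h2; apply/eqP; apply/negPn/negP => hyz.
case/andP: hw => /forallP /(_ y) /forallP /(_ z) /implyP /(_ hyz) /existsP [x /andP [hx hne]] _.
by move: hx hne; rewrite in_set2 => /orP [] /eqP ->; rewrite ?h1 ?h2 eqxx.
Qed.

Lemma weak_uv {T : finType} {e : rel T} (e_conn : connected_graph e) (u v : T)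
  (hw : wtr_set e [set u; v]) (huv : u != v) x :
  x != u -> dist e x v != dist e u v.
Proof.
move=> hxu; have [->|hxv] := eqVneq x v.
  have /eqP -> : dist e v v == 0 by rewrite dist0.
  by rewrite eq_sym dist0.
case/andP: hw => _ /forallP /(_ u) /implyP; rewrite in_set2 eqxx => /(_ isT).
move=> /forallP /(_ x) /implyP; rewrite in_setC in_set2 (negbTE hxu) (negbTE hxv).
move=> /(_ isT) /existsP [w' /andP [hw' hne]].
move: hw'; rewrite in_setD1 in_set2 => /andP [hw'u /orP [/eqP hh|/eqP hh]].
  by rewrite hh eqxx in hw'u.
by rewrite hh in hne.
Qed.

Lemma count_nb {T : finType} {e : rel T} (u v : T) (hw : wtr_set e [set u; v]) x
  (L : seq (nat * nat)) :
  (forall y, e x y -> (dist e y u, dist e y v) \in L) -> deg e x <= size L.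
Proof.
move=> hL; rewrite /deg cardE.
set f := fun y => (dist e y u, dist e y v).
rewrite -(size_map f); apply: uniq_leq_size.
  rewrite map_inj_in_uniq ?enum_uniq // => y z _ _ [= h1 h2]; exact: (@inj_uv T e u v hw y z h1 h2).
move=> p /mapP [y]; rewrite mem_enum inE => hy ->; exact: hL.
Qed.

Lemma path_split {T : finType} {e : rel T} x p :
  path e x p -> forall i, i <= size p ->
  walkn e i x (nth x (x :: p) i) && walkn e (size p - i) (nth x (x :: p) i) (last x p).
Proof.
elim: p x => [|y p IH] x /=.
  by move=> _ [|i] //= _; rewrite !eqxx.
move=> /andP [exy hp] [|i] hi /=.
  rewrite eqxx /=; apply/existsP; exists y; by rewrite exy path_walkn.
have /andP [h1 h2] := IH y hp i hi.
rewrite subSS (set_nth_default y x) //=.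
rewrite h2 andbT; apply/existsP; exists y; by rewrite exy h1.
Qed.

Lemma geo_pos {T : finType} {e : rel T} (e_sym : symmetric e) (e_conn : connected_graph e)
  u v p (geo : geodesic e u v p) i (hi : i <= dist e u v) :
  dist e u (nth u (u :: p) i) = i /\ dist e (nth u (u :: p) i) v = dist e u v - i.
Proof.
case/and3P: geo => hp /eqP hl /eqP hs.
have /andP [h1 h2] := @path_split _ _ u p hp i (eq_ind_r (fun k => i <= k) hi hs).
rewrite hl hs in h2.
have d1 := @dist_le _ _ _ _ _ h1; have d2 := @dist_le _ _ _ _ _ h2.
have := @dist_tri _ _ e_conn u (nth u (u :: p) i) v.
lia.
Qed.

Lemma no_tri {T : finType} {e : rel T} (e_sym : symmetric e) (e_irr : irreflexive e)
  (e_conn : connected_graph e) u v (hw : wtr_set e [set u; v]) (huv : u != v) z r :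
  e u z -> e z r -> ~~ e r u.
Proof.
move=> euz ezr; apply/negP => eru.
have zu : z != u by apply/eqP => h; rewrite h e_irr in euz.
have ru : r != u by apply/eqP => h; rewrite h e_irr in eru.
have rz : r != z by apply/eqP => h; rewrite h e_irr in ezr.
have w1 := weak_uv e_conn u v hw huv z zu; have w2 := weak_uv e_conn u v hw huv r ru.
have a1 := dist_edge e_conn _ _ v euz.
have a2 := dist_edge e_conn _ _ v (etrans (e_sym z u) euz).
have a3 := dist_edge e_conn _ _ v eru.
have a4 := dist_edge e_conn _ _ v (etrans (e_sym u r) eru).
have a5 := dist_edge e_conn _ _ v ezr.
have a6 := dist_edge e_conn _ _ v (etrans (e_sym r z) ezr).
have b1 : dist e z u = dist e r u.
  have /eqP -> : dist e z u == 1 by rewrite dist1 // e_sym.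
  by have /eqP -> : dist e r u == 1 by rewrite dist1.
have : dist e z v != dist e r v.
  by apply/eqP => h; move: rz; rewrite (inj_uv u v hw _ _ b1 h) eqxx.
lia.
Qed.

Lemma deg8 {T : finType} {e : rel T} (e_sym : symmetric e) (e_irr : irreflexive e)
  (e_conn : connected_graph e) u v (hw : wtr_set e [set u; v]) x :
  deg e x <= 8.
Proof.
set p := dist e x u; set q := dist e x v.
apply: (count_nb u v hw x [:: (p-1,q-1); (p-1,q); (p-1,q+1); (p,q-1); (p,q+1);
   (p+1,q-1); (p+1,q); (p+1,q+1)]) => y exy.
have a1 := dist_edge e_conn _ _ u exy.
have a2 := dist_edge e_conn _ _ u (etrans (e_sym y x) exy).
have a3 := dist_edge e_conn _ _ v exy.
have a4 := dist_edge e_conn _ _ v (etrans (e_sym y x) exy).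
have yx : y != x by apply/eqP => h; rewrite h e_irr in exy.
have : (dist e y u != p) || (dist e y v != q).
  rewrite -negb_and; apply/negP => /andP [/eqP h1 /eqP h2].
  by move: yx; rewrite (inj_uv u v hw _ _ h1 h2) eqxx.
rewrite /p /q !inE !xpair_eqE.
lia.
Qed.

Lemma deg3 {T : finType} {e : rel T} (e_sym : symmetric e) (e_irr : irreflexive e)
  (e_conn : connected_graph e) u v (hw : wtr_set e [set u; v]) (huv : u != v) z :
  e u z -> deg e z <= 3.
Proof.
move=> euz.
have zu : z != u by apply/eqP => h; rewrite h e_irr in euz.
have wz := weak_uv e_conn u v hw huv z zu.
have D0 : dist e u v != 0 by rewrite dist0.
have a1 := dist_edge e_conn _ _ v euz.
have a2 := dist_edge e_conn _ _ v (etrans (e_sym z u) euz).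
have zu1 : dist e z u = 1 by apply/eqP; rewrite dist1 // e_sym.
have uu0 : dist e u u = 0 by apply/eqP; rewrite dist0.
have key : forall r, e z r -> r != u ->
   [/\ dist e r u = 2, dist e r v != dist e u v, dist e r v <= (dist e z v).+1
     & dist e z v <= (dist e r v).+1].
  move=> r ezr ru; split.
  - have b1 : dist e r u != 0 by rewrite dist0.
    have b2 : dist e r u != 1 by rewrite dist1 // (no_tri e_sym e_irr e_conn u v hw huv z r euz ezr).
    have b3 := dist_edge e_conn _ _ u (etrans (e_sym r z) ezr).
    lia.
  - exact: weak_uv e_conn u v hw huv r ru.
  - exact: dist_edge e_conn _ _ v (etrans (e_sym r z) ezr).
  - exact: dist_edge e_conn _ _ v ezr.
case: (ltnP (dist e z v) (dist e u v)) => hdD.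
  apply: (count_nb u v hw z [:: (0, dist e u v); (2, dist e z v); (2, (dist e z v) - 1)]) => r ezr.
  have [->|ru] := eqVneq r u; first by rewrite uu0 mem_head.
  case: (key r ezr ru) => k1 k2 k3 k4; rewrite !inE !xpair_eqE; lia.
apply: (count_nb u v hw z [:: (0, dist e u v); (2, dist e z v); (2, (dist e z v) + 1)]) => r ezr.
have [->|ru] := eqVneq r u; first by rewrite uu0 mem_head.
case: (key r ezr ru) => k1 k2 k3 k4; rewrite !inE !xpair_eqE; lia.
Qed.
Lemma arith5 (a b i D : nat) :
  i != 0 -> i != 1 -> D - i != 0 -> D - i != 1 -> i <= D ->
  a <= i.+1 -> i <= a.+1 -> b <= (D - i).+1 -> D - i <= b.+1 -> D <= a + b ->
  (a != i) || (b != D - i) ->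
  (a, b) \in [:: (i-1, D - i + 1); (i, D - i + 1);
       (i+1, D - i + 1); (i+1, D - i); (i+1, D - i - 1)].
Proof.
move=> h0 h1 h2 h3 h4 h5 h6 h7 h8 h9 h10.
have [ha|[ha|ha]] : a = i - 1 \/ a = i \/ a = i + 1 by lia.
all: have [hb|[hb|hb]] : b = D - i - 1 \/ b = D - i \/ b = D - i + 1 by lia.
all: rewrite ha hb ?inE ?eqxx ?orbT //.
all: lia.
Qed.

Theorem theorem2 (T : finType) (e : rel T)
  (e_sym : symmetric e) (e_irr : irreflexive e) (e_conn : connected_graph e)
  (u v : T)
  (hdim : dim_wt e = 2)
  (hbasis : wt_metric_basis e [set u; v]) :
  (* (1) unique geodesic P = u :: p, and (3) on its interior vertices *)
  (exists p : seq T,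
      [/\ geodesic e u v p,
          (forall q : seq T, geodesic e u v q -> q = p) &
          (forall x, x \in u :: p -> x != u -> x != v ->
             ~~ e u x -> ~~ e v x -> deg e x <= 5)]) /\
  (* (2) *)
  (forall z, (e u z || e v z) -> deg e z <= 3) /\
  (* (4) *)
  (forall x, deg e x <= 8) /\
  (* (5) *)
  (forall w, w \in [set u; v] -> forall z, e w z -> forall r, e z r -> ~~ e r w).
Proof.
case/andP: (hbasis) => hw /eqP hc.
have huv : u != v by move: hc; rewrite cards2 hdim; case: (u != v).
have hw' : wtr_set e [set v; u] by rewrite setUC.
have hvu : v != u by rewrite eq_sym.
split; last split; last split.
- have [p /and3P [h1 h2 h3]] := walk_path _ _ _ (dist_walk e_conn u v).
  have geo : geodesic e u v p by rewrite /geodesic h1 h2 h3.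
  exists p; split => //.
  + move=> q geoq; have geoq' := geoq; case/and3P: geoq' => _ _ /eqP hq.
    apply: (eq_from_nth (x0 := u)); first by rewrite hq (eqP h3).
    move=> i hi; rewrite hq in hi.
    have [c1 c2] := geo_pos e_sym e_conn u v q geoq i.+1 hi.
    have [c3 c4] := geo_pos e_sym e_conn u v p geo i.+1 hi.
    rewrite /= in c1 c2 c3 c4.
    apply: (inj_uv u v hw).
      by rewrite dist_sym // c1 dist_sym // c3.
    by rewrite c2 c4.
  + move=> x hx xu xv nux nvx.
    set i := index x (u :: p).
    have hi : i <= dist e u v.
      by have := hx; rewrite -index_mem /= (eqP h3) ltnS.
    have hnx : nth u (u :: p) i = x by rewrite nth_index.
    have [c1 c2] := geo_pos e_sym e_conn u v p geo i hi; rewrite hnx in c1 c2.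
    have i0 : i != 0.
    by rewrite -c1 dist0 // (eq_sym u x).
    have i1 : i != 1 by rewrite -c1 dist1.
    have j0 : dist e u v - i != 0 by rewrite -c2 dist0.
    have j1 : dist e u v - i != 1 by rewrite -c2 dist1 // e_sym.
    rewrite dist_sym // in c1.
    apply: (count_nb u v hw x [:: (i-1, dist e u v - i + 1); (i, dist e u v - i + 1);
       (i+1, dist e u v - i + 1); (i+1, dist e u v - i); (i+1, dist e u v - i - 1)]) => y exy.
    have a1 := dist_edge e_conn _ _ u exy.
    have a2 := dist_edge e_conn _ _ u (etrans (e_sym y x) exy).
    have a3 := dist_edge e_conn _ _ v exy.
    have a4 := dist_edge e_conn _ _ v (etrans (e_sym y x) exy).
    have a5 := @dist_tri _ _ e_conn u y v.
    rewrite (dist_sym e_sym e_conn u y) in a5.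
    have yx : y != x by apply/eqP => h; rewrite h e_irr in exy.
    have : (dist e y u != i) || (dist e y v != dist e u v - i).
      rewrite -negb_and; apply/negP => /andP [/eqP h1' /eqP h2'].
      rewrite -c2 in h2'; rewrite -c1 in h1'.
      by move: yx; rewrite (inj_uv u v hw _ _ h1' h2') eqxx.
    rewrite c1 c2 in a1 a2 a3 a4.
    by apply: arith5.
- move=> z /orP [h|h].
    exact: deg3 e_sym e_irr e_conn u v hw huv z h.
  exact: deg3 e_sym e_irr e_conn v u hw' hvu z h.
- move=> x; exact: deg8 e_sym e_irr e_conn u v hw x.
- move=> w; rewrite in_set2 => /orP [/eqP ->|/eqP ->] z ezw r ezr.
    exact: no_tri e_sym e_irr e_conn u v hw huv z r ezw ezr.
  exact: no_tri e_sym e_irr e_conn v u hw' hvu z r ezw ezr.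
Qed.
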